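(* Let $n\ge 1$. Let $H_1$ be the graph obtained from the complete bipartite graph $K_{n,n}$ with left vertices $l_1,\dots,l_n$ and right vertices $r_1,\dots,r_n$ by adding two new vertices $s$ (source) and $t$ (sink), joining each $l_j$ to $s$ by $n$ internally vertex-disjoint paths of length $n$ (with new internal vertices), and joining each $r_j$ to $t$ by $n$ internally vertex-disjoint paths of length $n$ (with new internal vertices). For $i\ge 2$, let $H_i$ be the graph obtained from $H_1$ by replacing every edge $(a,b)$ of $H_1$ by a fresh copy of $H_{i-1}$ whose source and sink are identified with $a$ and $b$; the source and sink of $H_i$ are $s$ and $t$. Then for every $i\ge 1$, $H_i$ has treewidth at most $n+1$.
   Context: Treewidth: a tree decomposition of $G=(V_G,E_G)$ is a tree $T$ with bags $X_i\subseteq V_G$ ($i\in V(T)$) such that the bags cover $V_G$, every edge has both endpoints in some bag, and for $i,j,k\in V(T)$ with $j$ on the $i$–$k$ path, $X_i\cap X_k\subseteq X_j$. Its width is $\max_i|X_i|-1$; the treewidth of $G$ is the minimum width over its tree decompositions. *)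

(* Defs.v *)
From mathcomp Require Import all_boot.
Set Implicit Arguments. Unset Strict Implicit. Unset Printing Implicit Defensive.

(* A tree: a finite, nonempty, simple (symmetric, irreflexive), connected graph
   with exactly #|T| - 1 edges (each edge counted twice as an ordered pair). *)
Definition is_tree (T : finType) (e : rel T) : Prop :=
  [/\ 0 < #|T|, symmetric e, irreflexive e,
      (forall x y, connect e x y) &
      #|[set p : T * T | e p.1 p.2]| = 2 * (#|T| - 1)].

(* j lies on the (unique) i--k path of the tree: every walk from i to k visits j. *)
Definition on_tree_path (T : finType) (e : rel T) (i j k : T) : Prop :=
  forall p : seq T, path e i p -> last i p = k -> j \in i :: p.

Definition tree_decomposition (V : finType) (g : rel V)
    (T : finType) (e : rel T) (X : T -> {set V}) : Prop :=
  [/\ is_tree e,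
      (forall v : V, exists i : T, v \in X i),
      (forall u v : V, g u v -> exists i : T, (u \in X i) && (v \in X i)) &
      (forall i j k : T, on_tree_path e i j k -> X i :&: X k \subset X j)].

Definition decomp_width (V T : finType) (X : T -> {set V}) : nat :=
  (\max_(i : T) #|X i|) - 1.

Definition treewidth_le (V : finType) (g : rel V) (k : nat) : Prop :=
  exists (T : finType) (e : rel T) (X : T -> {set V}),
    tree_decomposition g e X /\ decomp_width X <= k.

Record tgraph := TGraph {
  vert : finType;
  arc : rel vert;
  src : vert;
  snk : vert }.

Definition adj (G : tgraph) : rel (vert G) := fun u v => arc u v || arc v u.

(* internal path vertex: (j, q, m) = vertex at position m (1 <= m <= n-1)
   on the q-th path attached to l_j (resp. r_j) *)
Definition innerT (n : nat) : finType :=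
  {x : 'I_n * 'I_n * 'I_n | 0 < nat_of_ord x.2}.

(* inl (inl true) = s, inl (inl false) = t,
   inl (inr (j, true)) = l_j, inl (inr (j, false)) = r_j,
   inr (x, true) = internal vertex of a left (s--l) path,
   inr (x, false) = internal vertex of a right (r--t) path *)
Definition V1 (n : nat) : finType :=
  ((bool + ('I_n * bool)) + (innerT n * bool))%type.

Definition vs n : V1 n := inl (inl true).
Definition vt n : V1 n := inl (inl false).
Definition vl n (j : 'I_n) : V1 n := inl (inr (j, true)).
Definition vr n (j : 'I_n) : V1 n := inl (inr (j, false)).

(* onP b j q m v: v is the vertex at position m (0..n) of the q-th path of
   side b at index j.  Left paths (b = true) go s (pos 0) -> l_j (pos n);
   right paths (b = false) go r_j (pos 0) -> t (pos n). *)
Definition onP n (b : bool) (j q : 'I_n) (m : nat) (v : V1 n) : bool :=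
  if m == 0 then v == (if b then vs n else vr j)
  else if m == n then v == (if b then vl j else vt n)
  else match v with
       | inr (x, b') => [&& b' == b, (val x).1.1 == j, (val x).1.2 == q
                          & nat_of_ord (val x).2 == m]
       | _ => false
       end.

Definition arc1 n : rel (V1 n) := fun u v =>
  [exists j : 'I_n, exists q : 'I_n, exists m : 'I_n,
      [|| onP true j q m u && onP true j q m.+1 v
        | onP false j q m u && onP false j q m.+1 v]]
  || [exists j : 'I_n, exists k : 'I_n, (u == vl j) && (v == vr k)].

Definition H1 (n : nat) : tgraph := @TGraph (V1 n) (@arc1 n) (vs n) (vt n).

Section Subst.
Variables G F : tgraph.

Definition arcsT : finType := {p : vert G * vert G | arc p.1 p.2}.
Definition innerF : finType := {x : vert F | (x != src F) && (x != snk F)}.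
Definition substV : finType := (vert G + (arcsT * innerF))%type.

(* image of vertex x of the copy of F placed on arc e = (a, b):
   src F |-> a, snk F |-> b, internal vertices are fresh *)
Definition emb (e : arcsT) (x : vert F) : substV :=
  match (insub x : option innerF) with
  | Some y => inr (e, y)
  | None => if x == src F then inl (val e).1 else inl (val e).2
  end.

Definition subst_arc : rel substV := fun w1 w2 =>
  [exists e : arcsT, exists x1 : vert F, exists x2 : vert F,
     [&& arc x1 x2, emb e x1 == w1 & emb e x2 == w2]].

Definition subst : tgraph := @TGraph substV subst_arc (inl (src G)) (inl (snk G)).
End Subst.

(* Hgr n k = H_{k+1} *)
Fixpoint Hgr (n k : nat) : tgraph :=
  match k with
  | 0 => H1 n
  | k'.+1 => subst (H1 n) (Hgr n k')
  end.

Definition H (n i : nat) : tgraph := Hgr n i.-1.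

(* Main.v *)
Require Import Defs.
From mathcomp Require Import all_boot.
Set Implicit Arguments. Unset Strict Implicit. Unset Printing Implicit Defensive.

Section Rooted.
Variables (V T : finType) (par : T -> T) (r : T) (d : T -> nat) (X : T -> {set V}).
Hypothesis parr : par r = r.
Hypothesis dpar : forall x, x != r -> d (par x) < d x.

Definition te : rel T := fun x y => (x != y) && ((par x == y) || (par y == x)).

Lemma par_neq x : x != r -> par x != x.
Proof. move=> /dpar h; apply/eqP=> e; by rewrite e ltnn in h. Qed.

Lemma te_sym : symmetric te.
Proof. by move=> x y; rewrite /te eq_sym orbC. Qed.

Lemma te_up x : x != r -> te x (par x).
Proof. by move=> h; rewrite /te eq_refl /= eq_sym par_neq. Qed.

Lemma conn_root x : connect te x r.
Proof.
elim: {x}(d x) {-2}x (leqnn (d x)) => [|k IH] x hx.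
  case: (eqVneq x r) => [->//|xr]. by have := dpar xr; rewrite ltnNge (leq_trans hx).
case: (eqVneq x r) => [->//|xr].
apply: connect_trans (connect1 (te_up xr)) (IH _ _).
by rewrite -ltnS (leq_trans (dpar xr)).
Qed.

Lemma is_tree_te : is_tree te.
Proof.
split.
- by apply/card_gt0P; exists r.
- exact: te_sym.
- by move=> x; rewrite /te eq_refl.
- move=> x y; apply: connect_trans (conn_root x) _.
  by rewrite (sym_connect_sym te_sym); apply: conn_root.
- pose A := [set (x, par x) | x in [set~ r]].
  pose B := [set (par x, x) | x in [set~ r]].
  have -> : [set p : T * T | te p.1 p.2] = A :|: B.
    apply/setP=> [[x y]]; rewrite !inE /te /=.
    apply/idP/idP.
    + case/andP=> xy /orP[/eqP e|/eqP e]; subst.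
      * apply/orP; left; apply/imsetP; exists x => //.
        rewrite !inE; apply: contra xy => /eqP e; by rewrite e parr.
      * apply/orP; right; apply/imsetP; exists y => //.
        rewrite !inE; apply: contra xy => /eqP e; by rewrite e parr.
    + case/orP=> /imsetP[z]; rewrite !inE => zr [-> ->].
      * by rewrite eq_sym par_neq // eq_refl.
      * by rewrite par_neq // eq_refl orbT.
  have AB : A :&: B = set0.
    apply/setP=> [[x y]]; rewrite !inE; apply/negP=> /andP[/imsetP[z]].
    rewrite !inE => zr [-> ->] /imsetP[w]; rewrite !inE => wr [e1 e2].
    have := dpar zr; have := dpar wr; rewrite -e1 e2 => h1 h2.
    by have := ltn_trans h1 h2; rewrite ltnn.
  rewrite cardsU AB cards0 subn0 !card_imset ?cardsC1.
  + by rewrite mul2n -addnn subn1.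
  + by move=> a b [].
  + by move=> a b [].
Qed.

Definition istop v i := (v \in X i) && ((i == r) || (v \notin X (par i))).

Hypothesis topU : forall v i1 i2, istop v i1 -> istop v i2 -> i1 = i2.

Lemma up_walk v i : v \in X i -> exists p t, [/\ path te i p, last i p = t,
  istop v t & all (fun x => v \in X x) (i :: p)].
Proof.
elim: {i}(d i) {-2}i (leqnn (d i)) => [|k IH] i hx vi.
  case: (eqVneq i r) => [ir|ir]; last by have := dpar ir; rewrite ltnNge (leq_trans hx).
  by subst; exists [::], r; split=> //=; rewrite ?vi // /istop vi eqxx.
case: (boolP (istop v i)) => ti; first by exists [::], i; split=> //=; rewrite vi.
have ir : i != r by apply: contraNneq ti => e; rewrite /istop vi e eqxx.
have vp : v \in X (par i) by move: ti; rewrite /istop vi (negbTE ir) /= negbK.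
have hd : d (par i) <= k by rewrite -ltnS (leq_trans (dpar ir)).
have [p [t [h1 h2 h3 h4]]] := IH (par i) hd vp.
exists (par i :: p), t; split=> //=; first by rewrite te_up.
by rewrite vi.
Qed.

Lemma down_walk v t k : istop v t -> v \in X k -> exists p, [/\ path te t p, last t p = k
  & all (fun x => v \in X x) (t :: p)].
Proof.
move=> tt.
elim: {k}(d k) {-2}k (leqnn (d k)) => [|m IH] k hx vk.
  case: (eqVneq k r) => [kr|kr]; last by have := dpar kr; rewrite ltnNge (leq_trans hx).
  have tk : istop v k by rewrite /istop vk kr eqxx.
  by exists [::]; rewrite (topU tt tk); split=> //=; rewrite vk.
case: (boolP (istop v k)) => tk; first by exists [::]; rewrite (topU tt tk); split=> //=; rewrite vk.
have kr : k != r by apply: contraNneq tk => e; rewrite /istop vk e eqxx.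
have vp : v \in X (par k) by move: tk; rewrite /istop vk (negbTE kr) /= negbK.
have hd : d (par k) <= m by rewrite -ltnS (leq_trans (dpar kr)).
have [p [h1 h2 h3]] := IH (par k) hd vp.
exists (rcons p k); split.
- by rewrite rcons_path h1 h2 te_sym te_up.
- by rewrite last_rcons.
- by rewrite -rcons_cons all_rcons h3 vk.
Qed.

Lemma rooted_td (g : rel V) :
  (forall v, exists i, v \in X i) ->
  (forall u v, g u v -> exists i, (u \in X i) && (v \in X i)) ->
  tree_decomposition g te X.
Proof.
move=> cov ecov; split=> //; first exact: is_tree_te.
move=> i j k hp; apply/subsetP=> v /setIP[vi vk].
have [p1 [t [h1 h2 h3 h4]]] := up_walk vi.
have [p2 [g1 g2 g3]] := down_walk h3 vk.
have := hp (p1 ++ p2); rewrite cat_path h1 h2 g1 last_cat h2 g2 => /(_ erefl erefl).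
rewrite -cat_cons mem_cat => /orP[jin|jin].
  by move/allP: h4 => /(_ j jin).
by move/allP: g3 => /(_ j); rewrite inE jin orbT => /(_ erefl).
Qed.

End Rooted.

Definition Good (G : tgraph) (k : nat) := exists (T : finType) (par : T -> T) (r : T)
  (d : T -> nat) (X : T -> {set vert G}),
  par r = r /\ (forall x, x != r -> d (par x) < d x) /\
  (forall v, exists i, v \in X i) /\
  (forall u v, @Defs.arc G u v -> exists i, (u \in X i) && (v \in X i)) /\
  (forall v i1 i2, istop par r X v i1 -> istop par r X v i2 -> i1 = i2) /\
  ((src G \in X r) && (snk G \in X r)) /\
  (forall i, #|X i| <= k).

Lemma good_tw G k : Good G k.+2 -> treewidth_le (@adj G) k.+1.
Proof.
move=> [T [par [r [d [X [pr [dp [cov [ec [tu [_ sz]]]]]]]]]]].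
exists T, (te par), X; split.
  apply: (rooted_td pr dp tu cov) => u v.
  rewrite /adj => /orP[/ec//|/ec [i h]].
  by exists i; rewrite andbC.
rewrite /decomp_width; apply: leq_trans (leq_sub2r 1 (_ : _ <= k.+2)) _.
  by apply/bigmax_leqP => i _; apply: sz.
by rewrite subn1.
Qed.

Lemma embC G F (e : arcsT G) (x : vert F) :
  (x = src F /\ emb e x = inl (val e).1) \/ (x = snk F /\ emb e x = inl (val e).2) \/
  (exists z : innerF F, x = val z /\ emb e x = inr (e, z)).
Proof.
rewrite /emb; case: insubP => [z _ <-|]; first by right; right; exists z.
rewrite negb_and !negbK => /orP[/eqP->|/eqP->]; first by left; rewrite eqxx.
case: (eqVneq (snk F) (src F)) => [e'|ne]; first by left.
by right; left.
Qed.

Lemma emb_val G F (e : arcsT G) (z : innerF F) : emb e (val z) = inr (e, z).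
Proof. by rewrite /emb valK. Qed.

Lemma good_subst G F k : Good G k -> Good F k -> Good (subst G F) k.
Proof.
move=> [TG [pG [rG [dG [XG [pGr [dGp [covG [ecG [topG [srcG szG]]]]]]]]]]].
move=> [TF [pF [rF [dF [XF [pFr [dFp [covF [ecF [topF [srcF szF]]]]]]]]]]].
pose nodeOf (e : arcsT G) :=
  odflt rG [pick i | ((val e).1 \in XG i) && ((val e).2 \in XG i)].
have nodeP e : ((val e).1 \in XG (nodeOf e)) && ((val e).2 \in XG (nodeOf e)).
  rewrite /nodeOf; case: pickP => [i -> //|h].
  have [i hi] := ecG _ _ (valP e); by move: (h i); rewrite hi.
pose T' := (TG + (arcsT G * TF))%type.
pose par' (x : T') : T' := match x with
  | inl i => inl (pG i)
  | inr (e, y) => if y == rF then inl (nodeOf e) else inr (e, pF y) end.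
pose D := \max_(i : TG) dG i.
pose d' (x : T') := match x with inl i => dG i | inr (e, y) => D + (dF y).+1 end.
pose X' (x : T') : {set vert (subst G F)} := match x with
  | inl i => [set (inl a : substV G F) | a in XG i]
  | inr (e, y) => [set emb e z | z in XF y] end.
have topL w i : istop par' (inl rG) X' w (inl i) ->
    exists a, w = inl a /\ istop pG rG XG a i.
  rewrite /istop /X' /par' => /andP[/imsetP[a ha ->]] h.
  exists a; split => //; rewrite ha /=.
  case/orP: h => [/eqP[->]|h]; first by rewrite eqxx.
  by apply/orP; right; apply: contra h => h'; apply: imset_f.
have topR w e y : istop par' (inl rG) X' w (inr (e, y)) ->
    exists z, w = inr (e, z) /\ istop pF rF XF (val z) y.
  rewrite /istop /X' /par' => /andP[/imsetP[x hx ->]] /=.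
  case: (eqVneq y rF) => [yr|yr] /= h.
    subst y; case: (embC e x) => [[_ ee]|[[_ ee]|[z [xz ee]]]].
    - by move: h; rewrite ee imset_f //; case/andP: (nodeP e).
    - by move: h; rewrite ee imset_f //; case/andP: (nodeP e).
    - by exists z; split => //; rewrite /istop -xz hx.
  have inpar x' : x' \in XF rF -> x' \in XF y -> x' \in XF (pF y).
    move=> h1 h2; apply/negPn/negP => h3.
    have t1 : istop pF rF XF x' y by rewrite /istop h2 h3 orbT.
    have t2 : istop pF rF XF x' rF by rewrite /istop h1 eqxx.
    by move: yr; rewrite (topF _ _ _ t1 t2) eqxx.
  case: (embC e x) => [[xs ee]|[[xs ee]|[z [xz ee]]]].
  - move: h; rewrite imset_f //; apply: inpar => //; rewrite xs.
    by case/andP: srcF.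
  - move: h; rewrite imset_f //; apply: inpar => //; rewrite xs.
    by case/andP: srcF.
  - exists z; split => //; rewrite -xz hx /=.
    by apply: contra h => h'; apply: imset_f.
exists T', par', (inl rG), d', X'; split; first by rewrite /= pGr.
split.
  case=> [i|[e y]] /=.
    by move=> h; apply: dGp; apply: contra h => /eqP->.
  move=> _; case: ifP => hy /=.
    by rewrite addnS ltnS (leq_trans (leq_bigmax _)) ?leq_addr.
  by rewrite ltn_add2l ltnS; apply: dFp; rewrite hy.
split.
  case=> [a|[e z]].
    by have [i hi] := covG a; exists (inl i); apply: imset_f.
  have [i hi] := covF (val z); exists (inr (e, i)).
  by rewrite /X' -emb_val; apply: imset_f.
split.
  move=> w1 w2 /existsP[e /existsP[x1 /existsP[x2 /and3P[ha /eqP e1 /eqP e2]]]]; subst w1 w2.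
  have [i /andP[h1 h2]] := ecF _ _ ha.
  by exists (inr (e, i)); rewrite /X' !imset_f.
split.
  move=> w [i1|[e1 y1]] [i2|[e2 y2]] h1 h2.
  - have [a1 [wa1 t1]] := topL _ _ h1; have [a2 [wa2 t2]] := topL _ _ h2.
    by move: wa2; rewrite wa1 => -[ea]; subst; rewrite (topG _ _ _ t1 t2).
  - by have [a1 [wa1 _]] := topL _ _ h1; have [a2 [wa2 _]] := topR _ _ _ h2; rewrite wa1 in wa2.
  - by have [a1 [wa1 _]] := topR _ _ _ h1; have [a2 [wa2 _]] := topL _ _ h2; rewrite wa1 in wa2.
  - have [z1 [wa1 t1]] := topR _ _ _ h1; have [z2 [wa2 t2]] := topR _ _ _ h2.
    by move: wa2; rewrite wa1 => -[ee ez]; subst; rewrite (topF _ _ _ t1 t2).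
split.
  by case/andP: srcG => h1 h2; rewrite /X' /= !imset_f.
case=> [i|[e y]]; rewrite /X'; apply: leq_trans (leq_imset_card _ _) _; [exact: szG | exact: szF].
Qed.

Section HOne.
Variable n : nat.

Definition T1 : finType := option ('I_n * option ('I_n * bool)).
Definition par1 (x : T1) : T1 :=
  match x with Some (j, Some (q, false)) => Some (j, None) | _ => None end.
Definition d1 (x : T1) : nat :=
  match x with None => 0 | Some (_, None) => 1 | Some (_, Some (_, true)) => 1
  | Some (_, Some (_, false)) => 2 end.
Definition isl (v : V1 n) : bool := match v with inl (inr (_, b)) => b | _ => false end.
Definition X1 (x : T1) : {set V1 n} :=
  match x with
  | None => [set v | (v == vs n) || (v == vt n) || isl v]
  | Some (j, None) => [set v | (v == vt n) || isl v || (v == vr j)]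
  | Some (j, Some (q, b)) => [set v | [exists m : 'I_n.+1, onP b j q m v]]
  end.

Lemma top_N j v : istop par1 None X1 v (Some (j, None)) -> v = vr j.
Proof.
rewrite /istop /= !inE.
case: v => [[[|]|[j' [|]]]|[x b]] //=.
by case/andP=> /eqP[->].
Qed.

Lemma top_P j q b v : istop par1 None X1 v (Some (j, Some (q, b))) ->
  exists x : innerT n, v = inr (x, b) /\ (val x).1.1 = j /\ (val x).1.2 = q.
Proof.
rewrite /istop /= inE => /andP[/existsP[m]]; rewrite /onP.
case: ifP => _.
  by move/eqP->; case: b => /=; rewrite !inE ?eqxx.
case: ifP => _.
  by move/eqP->; case: b => /=; rewrite !inE ?eqxx ?orbT.
case: v => // -[x b'] /and4P[/eqP-> /eqP h1 /eqP h2 _] _.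
by exists x.
Qed.

Lemma topU1 v i1 i2 : istop par1 None X1 v i1 -> istop par1 None X1 v i2 -> i1 = i2.
Proof.
have topNone v' : istop par1 None X1 v' None -> v' \in X1 None by case/andP.
case: i1 => [[j [[q b]|]]|] h1; case: i2 => [[j' [[q' b']|]]|] h2.
- have [x [e1 [f1 g1]]] := top_P h1; have [x' [e2 [f2 g2]]] := top_P h2.
  by move: e2; rewrite e1 => -[ex eb]; subst.
- by have [x [e1 _]] := top_P h1; move: (top_N h2); rewrite e1.
- by have [x [e1 _]] := top_P h1; move: (topNone _ h2); rewrite e1 inE.
- by have [x [e1 _]] := top_P h2; move: (top_N h1); rewrite e1.
- by move: (top_N h2); rewrite (top_N h1) => -[->].
- by move: (topNone _ h2); rewrite (top_N h1) inE.
- by have [x [e1 _]] := top_P h2; move: (topNone _ h1); rewrite e1 inE.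
- by move: (topNone _ h1); rewrite (top_N h2) inE.
- by [].
Qed.


Lemma cardU1_le (T : finType) (a : T) (A : {set T}) : #|a |: A| <= #|A|.+1.
Proof. by rewrite cardsU1; case: (a \notin A). Qed.

Lemma card_vl : #|[set vl j | j : 'I_n]| <= n.
Proof. by apply: leq_trans (leq_imset_card _ _) _; rewrite card_ord. Qed.

Lemma size1 x : #|X1 x| <= n.+2.
Proof.
case: x => [[j [[q b]|]]|].
- pose A := [set x : innerT n | ((val x).1.1 == j) && ((val x).1.2 == q)].
  have cA : #|A| <= n.
    rewrite -[n in _ <= n]card_ord; apply: (@leq_card_in _ _ (fun x : innerT n => (val x).2)).
    move=> [[[j1 q1] m1] p1] [[[j2 q2] m2] p2]; rewrite !inE /=.
    move=> /andP[/eqP-> /eqP->] /andP[/eqP-> /eqP->] e; subst; congr exist; exact: eq_irrelevance.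
  apply: leq_trans (subset_leq_card (_ : _ \subset
     (if b then vs n else vr j) |: ((if b then vl j else vt n) |: [set inr (x, b) | x in A]))) _.
    apply/subsetP => v; rewrite inE => /existsP[m]; rewrite /onP.
    case: ifP => _; first by move/eqP->; rewrite setU11.
    case: ifP => _; first by move/eqP->; rewrite setU1r // setU11.
    case: v => // -[x b'] /and4P[/eqP-> h1 h2 _].
    by rewrite setU1r // setU1r //; apply: imset_f; rewrite inE h1 h2.
  apply: leq_trans (cardU1_le _ _) _; rewrite ltnS.
  apply: leq_trans (cardU1_le _ _) _; rewrite ltnS.
  exact: leq_trans (leq_imset_card _ _) cA.
- apply: leq_trans (subset_leq_card (_ : _ \subset
     vt n |: (vr j |: [set vl k | k : 'I_n]))) _.
    apply/subsetP => v; rewrite inE.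
    case: v => [[[|]|[j' [|]]]|[x b]] //=; rewrite ?setU11 //.
      by move=> _; rewrite setU1r // setU1r //; apply: imset_f.
    by move/eqP => [->]; rewrite setU1r // setU11.
  apply: leq_trans (cardU1_le _ _) _; rewrite ltnS.
  apply: leq_trans (cardU1_le _ _) _; rewrite ltnS.
  exact: card_vl.
- apply: leq_trans (subset_leq_card (_ : _ \subset
     vs n |: (vt n |: [set vl k | k : 'I_n]))) _.
    apply/subsetP => v; rewrite inE.
    case: v => [[[|]|[j' [|]]]|[x b]] //=; rewrite ?setU11 //.
      by move=> _; rewrite setU1r // setU11.
    by move=> _; rewrite setU1r // setU1r //; apply: imset_f.
  apply: leq_trans (cardU1_le _ _) _; rewrite ltnS.
  apply: leq_trans (cardU1_le _ _) _; rewrite ltnS.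
  exact: card_vl.
Qed.


Lemma good_H1 : Good (H1 n) n.+2.
Proof.
exists T1, par1, None, d1, X1; split; first by [].
split; first by case=> [[j [[q []]|]]|] //; rewrite eqxx.
split.
  case=> [[[|]|[j [|]]]|[x b]].
  - by exists None; rewrite inE eqxx.
  - by exists None; rewrite inE eqxx orbT.
  - by exists None; rewrite inE orbT.
  - by exists (Some (j, None)); rewrite inE eqxx orbT.
  - case: x => [[[j q] m] hm]; exists (Some (j, Some (q, b))); rewrite inE.
    apply/existsP; exists (widen_ord (leqnSn n) m); rewrite /onP /=.
    by rewrite eqn0Ngt hm /= (ltn_eqF (ltn_ord m)) !eqxx.
split.
  move=> u v /orP[/existsP[j /existsP[q /existsP[m /orP[/andP[h1 h2]|/andP[h1 h2]]]]]|].
  - exists (Some (j, Some (q, true))); rewrite !inE; apply/andP; split; apply/existsP.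
      by exists (inord m); rewrite inordK // ltnW // ltnS.
    by exists (inord m.+1); rewrite inordK // ltnS.
  - exists (Some (j, Some (q, false))); rewrite !inE; apply/andP; split; apply/existsP.
      by exists (inord m); rewrite inordK // ltnW // ltnS.
    by exists (inord m.+1); rewrite inordK // ltnS.
  - move=> /existsP[j /existsP[k /andP[/eqP-> /eqP->]]].
    by exists (Some (k, None)); rewrite !inE eqxx !orbT.
split; first exact: topU1.
split; first by rewrite !inE !eqxx orbT.
exact: size1.
Qed.

End HOne.

Lemma good_Hgr n k : Good (Hgr n k) n.+2.
Proof. elim: k => [|k IH] /=; [exact: good_H1 | exact: good_subst (good_H1 n) IH]. Qed.

Theorem lemma2 (n i : nat) : 1 <= n -> 1 <= i ->
  treewidth_le (@adj (H n i)) (n + 1).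
Proof. by move=> _ _; rewrite addn1; apply: good_tw; apply: good_Hgr. Qed.
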